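(* Let $R$ be a commutative graded ring, $P$ a homogeneous prime ideal, $S=R\setminus P$ and $M$ a graded $R$-module. Then $S^{-1}M=0$ if and only if $\overline{\mathrm{Hom}}(M,E^g(R/P))=0$.
   Context: $\overline{\mathrm{Hom}}(M,N)=\bigoplus_{i\in\mathbb{Z}}\mathrm{Hom}_{Gr(R)}(M,N(i))$, where $Gr(R)$ is the category of graded $R$-modules with degree-preserving maps and $N(i)$ the grading shift; $E^g$ is the injective envelope in $Gr(R)$. *)

(* Defs.v *)
From HB Require Import structures.
From mathcomp Require Import all_boot all_order all_algebra.
Set Implicit Arguments. Unset Strict Implicit. Unset Printing Implicit Defensive.
Import GRing.Theory.
Local Open Scope ring_scope.

Section Grading.
Variable V : zmodType.

Definition subgroupP (A : V -> Prop) : Prop :=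
  A 0 /\ forall x y, A x -> A y -> A (x - y).

(* V = \bigoplus_{i in Z} G i (internal direct sum of subgroups) *)
Definition graded_family (G : int -> V -> Prop) : Prop :=
  (forall i, subgroupP (G i)) /\
  (forall x : V, exists (s : seq int) (f : int -> V),
      uniq s /\ (forall i, G i (f i)) /\ x = \sum_(i <- s) f i) /\
  (forall (s : seq int) (f : int -> V), uniq s -> (forall i, G i (f i)) ->
      \sum_(i <- s) f i = 0 -> forall i, i \in s -> f i = 0).

Definition graded_sub (G : int -> V -> Prop) (N : V -> Prop) : Prop :=
  forall (x : V) (s : seq int) (f : int -> V), N x -> uniq s ->
    (forall i, G i (f i)) -> x = \sum_(i <- s) f i -> forall i, i \in s -> N (f i).
End Grading.

Definition graded_ring (R : comNzRingType) (Rg : int -> R -> Prop) : Prop :=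
  graded_family Rg /\ Rg 0 1 /\
  (forall i j (a b : R), Rg i a -> Rg j b -> Rg (i + j) (a * b)).

Record gmod (R : comNzRingType) (Rg : int -> R -> Prop) := GMod {
  gcar :> lmodType R;
  ggr : int -> gcar -> Prop;
  ggr_family : graded_family ggr;
  ggr_scale : forall i j (a : R) (x : gcar), Rg i a -> ggr j x -> ggr (i + j) (a *: x) }.
Arguments gmod : clear implicits.
Arguments ggr {R Rg} g _ _.

(* f : M -> N is an element of Hom_{Gr(R)}(M, N(d)), where N(d)_j = N_{d+j} *)
Definition ghom (R : comNzRingType) (Rg : int -> R -> Prop) (M N : gmod R Rg)
  (d : int) (f : M -> N) : Prop :=
  (forall (a : R) (x y : M), f (a *: x + y) = a *: f x + f y) /\
  (forall j (x : M), ggr M j x -> ggr N (d + j) (f x)).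

(* \overline{Hom}(M,N) = \bigoplus_d Hom_{Gr(R)}(M, N(d)) is zero *)
Definition hombar_zero (R : comNzRingType) (Rg : int -> R -> Prop) (M N : gmod R Rg) : Prop :=
  forall (d : int) (f : M -> N), ghom d f -> forall x : M, f x = 0.

Definition ginjective (R : comNzRingType) (Rg : int -> R -> Prop) (E : gmod R Rg) : Prop :=
  forall (A B : gmod R Rg) (u : A -> B) (g : A -> E),
    ghom 0 u -> injective u -> ghom 0 g ->
    exists h : B -> E, ghom 0 h /\ forall x : A, h (u x) = g x.

Definition gsubmodule (R : comNzRingType) (Rg : int -> R -> Prop) (E : gmod R Rg)
  (N : E -> Prop) : Prop :=
  N 0 /\ (forall x y, N x -> N y -> N (x + y)) /\
  (forall (a : R) x, N x -> N (a *: x)) /\ graded_sub (ggr E) N.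

Definition gessential (R : comNzRingType) (Rg : int -> R -> Prop) (Q E : gmod R Rg)
  (iota : Q -> E) : Prop :=
  ghom 0 iota /\ injective iota /\
  forall N : E -> Prop, gsubmodule N -> (exists x, N x /\ x <> 0) ->
    exists y : Q, N (iota y) /\ iota y <> 0.

Definition ginj_envelope (R : comNzRingType) (Rg : int -> R -> Prop) (Q E : gmod R Rg)
  (iota : Q -> E) : Prop :=
  gessential iota /\ ginjective E.

Definition idealP (R : comNzRingType) (P : R -> Prop) : Prop :=
  P 0 /\ (forall x y, P x -> P y -> P (x + y)) /\ (forall a x, P x -> P (a * x)).

Definition prime_idealP (R : comNzRingType) (P : R -> Prop) : Prop :=
  idealP P /\ ~ P 1 /\ (forall a b, P (a * b) -> P a \/ P b).

(* pi : R -> Q is a degree-0 surjective graded R-linear map with kernel P,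
   i.e. Q is (isomorphic in Gr(R) to) the graded module R/P *)
Definition is_quotient_by (R : comNzRingType) (Rg : int -> R -> Prop) (P : R -> Prop)
  (Q : gmod R Rg) (pi : R -> Q) : Prop :=
  (forall a b c : R, pi (a * b + c) = a *: pi b + pi c) /\
  (forall j (a : R), Rg j a -> ggr Q j (pi a)) /\
  (forall q : Q, exists a, pi a = q) /\
  (forall a, pi a = 0 <-> P a).

(* the equivalence relation defining S^{-1}M on pairs (m, s) *)
Definition loc_rel (R : comNzRingType) (S : R -> Prop) (M : lmodType R)
  (p q : M * R) : Prop :=
  exists t, S t /\ t *: (q.2 *: p.1 - p.2 *: q.1) = 0.

Definition loc_zero (R : comNzRingType) (S : R -> Prop) (M : lmodType R) : Prop :=
  forall (m : M) (s : R), S s -> loc_rel S (m, s) (0, 1).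
Arguments is_quotient_by {R Rg} P Q pi.

(* Main.v *)
From HB Require Import structures.
Require Import Defs.
From mathcomp Require Import all_boot all_order all_algebra.
From Stdlib Require Import ClassicalEpsilon Classical.
Set Implicit Arguments. Unset Strict Implicit. Unset Printing Implicit Defensive.
Import GRing.Theory.
Local Open Scope ring_scope.

Section GF.
Variables (V : zmodType) (G : int -> V -> Prop).

Lemma sg0 A : subgroupP A -> A (0 : V). Proof. by case. Qed.
Lemma sgN (A : V -> Prop) y : subgroupP A -> A y -> A (- y).
Proof. by case=> h0 hB hy; rewrite -sub0r; apply: hB. Qed.
Lemma sgD (A : V -> Prop) y z : subgroupP A -> A y -> A z -> A (y + z).
Proof. move=> hA hy hz; rewrite -(opprK z); have [_ hB] := hA; apply: hB => //; exact: sgN. Qed.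
Lemma sg_sum (A : V -> Prop) (I : eqType) (s : seq I) (F : I -> V) :
  subgroupP A -> (forall i, i \in s -> A (F i)) -> A (\sum_(i <- s) F i).
Proof.
move=> hA; elim: s => [|a s IH] h; first by rewrite big_nil; exact: sg0.
rewrite big_cons; apply: sgD => //; first by apply: h; rewrite inE eqxx.
by apply: IH => i hi; apply: h; rewrite inE hi orbT.
Qed.

Hypothesis hG : graded_family G.

Lemma L1 (k : int) (s : seq int) (g : int -> V) : uniq s ->
  (forall i, i \in s -> G (i + k) (g i)) -> \sum_(i <- s) g i = 0 ->
  forall i, i \in s -> g i = 0.
Proof.
move=> us hg hs i his.
have H := hG.2.2 (map (fun i => i + k) s) (fun j => if (j - k) \in s then g (j - k) else 0).
have := H _ _ _ (i + k); rewrite /= addrK his; apply.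
- by rewrite map_inj_uniq // => a b; apply: addIr.
- move=> j; case: ifP => h; first by have := hg _ h; rewrite subrK.
  exact: sg0 (hG.1 j).
- by rewrite big_map -[RHS]hs; apply: eq_big_seq => j hj; rewrite addrK hj.
- exact: (map_f (fun i => i + k) his).
Qed.

Lemma L2 (k d : int) (s : seq int) (g : int -> V) (y : V) : uniq s ->
  (forall i, i \in s -> G (i + k) (g i)) -> G d y -> y = \sum_(i <- s) g i ->
  forall i, i \in s -> i + k != d -> g i = 0.
Proof.
move=> us hg hy ey i his ne.
have ne' : i != d - k by apply: contra ne => /eqP ->; rewrite subrK.
case: (boolP ((d - k) \in s)) => hd.
- have := @L1 k s (fun j => if j == d - k then g j - y else g j) us _ _ i his.
  rewrite (negbTE ne'); apply.
  + move=> j hj; case: eqP => [ej|_]; last exact: hg.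
    apply: (hG.1 (j + k)).2; first exact: hg.
    by rewrite ej subrK.
  + rewrite (eq_bigr (fun j => g j - (if j == d - k then y else 0))); last first.
      by move=> j _; case: eqP => // _; rewrite subr0.
    rewrite sumrB -ey [X in _ - X](bigD1_seq (d - k)) //= eqxx big1 ?addr0 ?subrr //.
    by move=> j /negbTE ->.
- have := @L1 k ((d - k) :: s) (fun j => if j == d - k then - y else g j) _ _ _ i.
  rewrite (negbTE ne') inE his orbT; apply => //.
  + by rewrite /= hd us.
  + move=> j; rewrite inE; case: eqP => [->|_] /= hj; last exact: hg.
    by rewrite subrK; apply: sgN => //; exact: hG.1.
  + rewrite big_cons eqxx (eq_big_seq g) -?ey ?addNr // => j hj.
    by case: eqP => // ej; move: hd; rewrite -ej hj.
Qed.
End GF.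
Section RXsec.
Variables (R : comNzRingType) (M : lmodType R) (x : M).
Definition inRXb (y : M) : bool :=
  if excluded_middle_informative (exists a : R, y = a *: x) then true else false.
Lemma inRXP y : reflect (exists a : R, y = a *: x) (inRXb y).
Proof. rewrite /inRXb; case: excluded_middle_informative => h; constructor => //. Qed.

Lemma inRX_closed : subsemimod_closed inRXb.
Proof.
split; [split|].
- by apply/inRXP; exists 0; rewrite scale0r.
- by move=> u v /inRXP[a ->] /inRXP[b ->]; apply/inRXP; exists (a + b); rewrite scalerDl.
- by move=> c u /inRXP[a ->]; apply/inRXP; exists (c * a); rewrite scalerA.
Qed.
HB.instance Definition _ := GRing.isSubmodClosed.Build R M inRXb inRX_closed.
Record RX := MkRX { rx_val :> M; rx_prop : inRXb rx_val }.
HB.instance Definition _ := [isSub for rx_val].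
HB.instance Definition _ := [Choice of RX by <:].
HB.instance Definition _ := [SubChoice_isSubLmodule of RX by <:].
Lemma rx_valZD (a : R) (y z : RX) : rx_val (a *: y + z) = a *: rx_val y + rx_val z.
Proof. by []. Qed.
Lemma rx_val0 : rx_val (0 : RX) = 0. Proof. by []. Qed.
Lemma rx_valB (y z : RX) : rx_val (y - z) = rx_val y - rx_val z. Proof. by []. Qed.
End RXsec.

Section AB.
Variables (R : comNzRingType) (Rg : int -> R -> Prop) (M : gmod R Rg) (x : gcar M) (k : int).
Hypotheses (hR : graded_ring Rg) (hx : ggr M k x).

Lemma rx_val_sum (s : seq int) (F : int -> RX x) :
  rx_val (\sum_(i <- s) F i) = \sum_(i <- s) rx_val (F i).
Proof.
elim: s => [|a s IH]; first by rewrite !big_nil.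
by rewrite !big_cons -IH.
Qed.

Definition Agr (j : int) (y : RX x) : Prop := ggr M (j + k) (rx_val y).

Lemma A_family : graded_family Agr.
Proof.
have hM := ggr_family M.
split; [|split].
- move=> j; split; first exact: sg0 (hM.1 _).
  by move=> y z hy hz; rewrite /Agr rx_valB; apply: (hM.1 _).2.
- move=> y; case: y => y hy0; have [a ey] := inRXP _ _ hy0.
  have [u [c [uu [hc ea]]]] := hR.1.2.1 a.
  have mem i : inRXb x (c i *: x) by apply/inRXP; exists (c i).
  exists u, (fun i => MkRX (mem i)); split => //; split.
    by move=> i; rewrite /Agr /=; apply: ggr_scale.
  by apply: val_inj; rewrite /= rx_val_sum /= ey ea scaler_suml.
- move=> s f us hf hs i hi; apply: val_inj => /=.
  apply: (@L1 _ _ hM k s (fun i => rx_val (f i)) us _ _ i hi).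
    by move=> j _; exact: hf.
  by have := congr1 (@rx_val _ _ x) hs; rewrite rx_val_sum.
Qed.

Lemma A_scale i j (a : R) (y : RX x) : Rg i a -> Agr j y -> Agr (i + j) (a *: y).
Proof. by move=> ha hy; rewrite /Agr -addrA; exact: ggr_scale. Qed.

Definition Bgr (j : int) (y : gcar M) : Prop := ggr M (j + k) y.

Lemma B_family : graded_family Bgr.
Proof.
have hM := ggr_family M.
split; [|split].
- by move=> j; exact: hM.1.
- move=> y; have [s [f [us [hf ey]]]] := hM.2.1 y.
  exists (map (fun i => i - k) s), (fun j => f (j + k)); split.
    by rewrite map_inj_uniq // => a b; apply: addIr.
  split; first by move=> i; exact: hf.
  by rewrite big_map ey; apply: eq_bigr => i _; rewrite subrK.
- by move=> s f us hf hs i hi; exact: (@L1 _ _ hM k s f us (fun j _ => hf j) hs i hi).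
Qed.

Lemma B_scale i j (a : R) (y : gcar M) : Rg i a -> Bgr j y -> Bgr (i + j) (a *: y).
Proof. by move=> ha hy; rewrite /Bgr -addrA; exact: ggr_scale. Qed.
End AB.

Definition rep (R : comNzRingType) (M : lmodType R) (x : M) (y : RX x) : R :=
  proj1_sig (constructive_indefinite_description _ (elimT (inRXP x (rx_val y)) (rx_prop y))).
Lemma repP (R : comNzRingType) (M : lmodType R) (x : M) (y : RX x) : rx_val y = rep y *: x.
Proof. exact: (proj2_sig (constructive_indefinite_description _ (elimT (inRXP x (rx_val y)) (rx_prop y)))). Qed.

Section Lin.
Variables (R : comNzRingType) (U V : lmodType R) (f : U -> V).
Hypothesis hf : forall a x y, f (a *: x + y) = a *: f x + f y.
Lemma lin0 : f 0 = 0.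
Proof.
have h := hf 1 0 0; rewrite !scale1r addr0 in h.
by have := congr1 (fun z => z - f 0) h; rewrite /= addrK subrr => /esym.
Qed.
Lemma linD x y : f (x + y) = f x + f y.
Proof. by have := hf 1 x y; rewrite !scale1r. Qed.
Lemma linZ a x : f (a *: x) = a *: f x.
Proof. by have := hf a x 0; rewrite !addr0 lin0 addr0. Qed.
Lemma lin_sum (I : Type) (s : seq I) (F : I -> U) : f (\sum_(i <- s) F i) = \sum_(i <- s) f (F i).
Proof. elim: s => [|a s IH]; first by rewrite !big_nil lin0. by rewrite !big_cons linD IH. Qed.
End Lin.

Section Pi.
Variables (R : comNzRingType) (V : lmodType R) (pi : R -> V).
Hypothesis hpi : forall a b c : R, pi (a * b + c) = a *: pi b + pi c.
Lemma pi0 : pi 0 = 0.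
Proof.
have h := hpi 1 0 0; rewrite scale1r mul1r addr0 in h.
by have := congr1 (fun z => z - pi 0) h; rewrite /= addrK subrr => /esym.
Qed.
Lemma piD a b : pi (a + b) = pi a + pi b.
Proof. by have := hpi 1 a b; rewrite mul1r scale1r. Qed.
Lemma piM a b : pi (a * b) = a *: pi b.
Proof. by have := hpi a b 0; rewrite !addr0 pi0 addr0. Qed.
Lemma pi_sum (I : Type) (s : seq I) (F : I -> R) : pi (\sum_(i <- s) F i) = \sum_(i <- s) pi (F i).
Proof. elim: s => [|a s IH]; first by rewrite !big_nil pi0. by rewrite !big_cons piD IH. Qed.
End Pi.

Lemma ideal_sum (R : comNzRingType) (P : R -> Prop) (I : eqType) (s : seq I) (F : I -> R) :
  idealP P -> (forall i, i \in s -> P (F i)) -> P (\sum_(i <- s) F i).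
Proof.
move=> hP; elim: s => [|a s IH] h; first by rewrite big_nil; exact: hP.1.
rewrite big_cons; apply: hP.2.1; first by apply: h; rewrite inE eqxx.
by apply: IH => i hi; apply: h; rewrite inE hi orbT.
Qed.

Unset Implicit Arguments.
Set Strict Implicit.

Theorem mainTheorem10 (R : comNzRingType) (Rg : int -> R -> Prop) (P : R -> Prop)
  (M Q E : gmod R Rg) (pi : R -> Q) (iota : Q -> E) :
  graded_ring Rg -> prime_idealP P -> graded_sub Rg P ->
  is_quotient_by P Q pi -> ginj_envelope iota ->
  (loc_zero (fun r : R => ~ P r) M <-> hombar_zero M E).
Proof.
move=> hR hP hPg hpi [[hiota [iinj iess]] hinj].
have [hpi1 [hpideg [hpisurj hpiker]]] := hpi.
have iota0 : iota 0 = 0 := lin0 hiota.1.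
have piP0 : forall a, P a -> pi a = 0 := fun a h => (hpiker a).2 h.
have hP1 : ~ P 1 := hP.2.1.
have hM := ggr_family M.
split.
- move=> hl d f hf m.
  have key : forall j y, ggr M j y -> f y = 0.
  { move=> j y hy.
    have [t [ht et]] := hl y 1 hP1.
    rewrite /= scale1r scaler0 subr0 in et.
    have [u [c [uu [hc ec]]]] := hR.1.2.1 t.
    have hcy : forall i, i \in u -> c i *: y = 0.
      apply: (@L1 _ _ hM j u (fun i => c i *: y) uu).
        by move=> i _; exact: ggr_scale.
      by rewrite -scaler_suml -ec.
    have [i [iu hci]] : exists i, i \in u /\ ~ P (c i).
      apply: NNPP => hn; apply: ht; rewrite ec; apply: (ideal_sum hP.1) => i iu.
      by apply: NNPP => hci; apply: hn; exists i; split.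
    have hsy : c i *: f y = 0 by rewrite -(linZ hf.1) hcy // (lin0 hf.1).
    apply: NNPP => hfy.
    pose N := fun w : gcar E => c i *: w = 0.
    have gN : gsubmodule N.
      split; [by rewrite /N scaler0|split;[|split]].
      + by move=> w1 w2; rewrite /N scalerDr => -> ->; rewrite addr0.
      + by move=> a w; rewrite /N scalerA mulrC -scalerA => ->; rewrite scaler0.
      + move=> w l g hw ul hg ew i0 il; rewrite /N.
        apply: (@L1 _ _ (ggr_family E) i l (fun i1 => c i *: g i1) ul) => //.
          by move=> i1 _; rewrite addrC; apply: ggr_scale (hc i) (hg i1).
        by rewrite -scaler_sumr -ew.
    have [q [Nq iq]] := iess N gN (ex_intro _ (f y) (conj hsy hfy)).
    have sq : c i *: q = 0 by apply: iinj; rewrite (linZ hiota.1) Nq iota0.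
    have [b eb] := hpisurj q.
    have : P (c i * b) by apply/hpiker; rewrite (piM hpi1) eb.
    case/(hP.2.2) => [//|hb]; apply: iq; by rewrite -eb (piP0 _ hb) iota0. }
  have [s [mi [us [hmi em]]]] := hM.2.1 m.
  by rewrite em (lin_sum hf.1) big_seq big1 // => i _; exact: key (hmi i).
- move=> hz m s0 hs0.
  apply: NNPP => hn.
  have hm : forall t, ~ P t -> t *: m <> 0.
    by move=> t ht e; apply: hn; exists t; split => //=; rewrite scale1r scaler0 subr0.
  have [u [mi [uu [hmi em]]]] := hM.2.1 m.
  have [i [iu hi]] : exists i, i \in u /\ forall t, ~ P t -> t *: mi i <> 0.
    apply: NNPP => hn2.
    have gen : forall l : seq int, (forall i, i \in l -> exists t, ~ P t /\ t *: mi i = 0) ->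
        exists T, ~ P T /\ T *: \sum_(i <- l) mi i = 0.
      elim => [|a l IH] h; first by exists 1; split => //; rewrite big_nil scaler0.
      have [ta [hta eta]] := h a (mem_head a l).
      have [T [hT eT]] : exists T, ~ P T /\ T *: \sum_(i <- l) mi i = 0.
        by apply: IH => i il; apply: h; rewrite inE il orbT.
      exists (ta * T); split; first by case/(hP.2.2).
      have e1 : (ta * T) *: mi a = 0 by rewrite mulrC -scalerA eta scaler0.
      have e2 : (ta * T) *: \sum_(i <- l) mi i = 0 by rewrite -scalerA eT scaler0.
      by rewrite big_cons scalerDr e1 e2 addr0.
    have [|T [hT eT]] := gen u.
      move=> i iu; apply: NNPP => hne; apply: hn2; exists i; split => // t ht eti.
      by apply: hne; exists t; split.
    by apply: (hm T hT); rewrite em.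
  move: (mi i) (hmi i) hi => x hx hix.
  have hann : forall t, t *: x = 0 -> P t.
    by move=> t e; apply: NNPP => ht; exact: hix t ht e.
  have piE : forall c1 c2, c1 *: x = c2 *: x -> pi c1 = pi c2.
    move=> c1 c2 e; have : (c1 - c2) *: x = 0 by rewrite scalerBl e subrr.
    move/hann => hc; have -> : c1 = (c1 - c2) + c2 by rewrite subrK.
    by rewrite (piD hpi1) (piP0 _ hc) add0r.
  pose A := @GMod R Rg _ _ (A_family hR hx) (@A_scale _ _ M x i).
  pose B := @GMod R Rg _ _ (B_family M i) (@B_scale _ _ M i).
  pose uu0 := (@rx_val _ _ x) : A -> B.
  pose g := (fun y : RX x => iota (pi (rep y))) : A -> E.
  have degQ : forall j (y : RX x), @Agr _ _ M x i j y -> ggr Q j (pi (rep y)).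
    move=> j y hy.
    have [v [ci [uv [hci ec]]]] := hR.1.2.1 (rep y).
    have e : rx_val y = \sum_(l <- v) ci l *: x by rewrite repP ec scaler_suml.
    have z0 := @L2 _ _ hM i (j + i) v (fun l => ci l *: x) (rx_val y) uv
       (fun l _ => ggr_scale (hci l) hx) hy e.
    rewrite ec (pi_sum hpi1); apply: sg_sum; first exact: (ggr_family Q).1.
    move=> l lv; case: (eqVneq l j) => [->|nlj]; first exact: hpideg.
    rewrite piP0; first exact: sg0 ((ggr_family Q).1 j).
    by apply: hann; apply: z0 => //; rewrite (inj_eq (addIr i)).
  have hg : ghom 0 g.
    split.
      move=> a y z; rewrite /g -hiota.1 -hpi1; congr iota; apply: piE.
      by rewrite -repP scalerDl -scalerA -!repP.
    by move=> j y hy; apply: hiota.2; exact: degQ.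
  have hu : ghom 0 uu0.
    split; first by move=> a y z.
    by move=> j y hy /=; rewrite /Bgr add0r; exact: hy.
  have [h [hh hhu]] := hinj A B uu0 g hu (fun y1 y2 => @val_inj _ _ _ y1 y2) hg.
  have hh' : ghom (- i) (h : M -> E).
    split; first exact: hh.1.
    move=> j y hy; have := hh.2 (j - i) y; rewrite /= /Bgr subrK add0r addrC; apply.
    exact: hy.
  have inx : inRXb x x by apply/inRXP; exists 1; rewrite scale1r.
  pose xx := MkRX inx.
  have := hhu xx; rewrite /uu0 /= (hz (- i) h hh' x) /g => /esym.
  rewrite -iota0 => /iinj.
  rewrite (piE _ 1); last by rewrite -repP scale1r.
  by move/hpiker.
Qed.
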